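(* Let $\mathbf{A}\in\mathbb{R}^{n\times d}$, $\mathbf{B}=[\mathbf{b}_1,\dots,\mathbf{b}_{d_B}]\in\mathbb{R}^{n\times d_B}$, $\mathbf{C}=[\mathbf{c}_1,\dots,\mathbf{c}_{n_C}]^{\rm T}\in\mathbb{R}^{n_C\times d}$, and let $k,r$ be integers with $1\le k\le\mathrm{rank}(\mathbf{B})$, $1\le r\le\mathrm{rank}(\mathbf{C})$. Then $$P_{k,r}(x;\mathbf{A},\mathbf{B},\mathbf{C})=\frac1k\sum_{i=1}^{d_B}\|\mathbf{b}_i\|^2P_{k-1,r}(x;\mathbf{Q}_{\{i\}}\mathbf{A},\mathbf{Q}_{\{i\}}\mathbf{B},\mathbf{C})$$ and $$P_{k,r}(x;\mathbf{A},\mathbf{B},\mathbf{C})=\frac1r\sum_{i=1}^{n_C}\|\mathbf{c}_i\|^2P_{k,r-1}(x;\mathbf{A}\mathbf{P}_{\{i\}},\mathbf{B},\mathbf{C}\mathbf{P}_{\{i\}}).$$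
   Context: Notation: $\mathbf{M}_{R,S}$, $\mathbf{M}_{:,S}$, $\mathbf{M}_{R,:}$ are submatrices; $\mathbf{M}^\dagger$ Moore–Penrose pseudoinverse with $\mathbf{M}_{R,S}^\dagger:=(\mathbf{M}_{R,S})^\dagger$; empty determinants are $1$ and $\mathbf{M}_{:,\emptyset}\mathbf{M}_{:,\emptyset}^\dagger$, $\mathbf{M}_{\emptyset,:}^\dagger\mathbf{M}_{\emptyset,:}$ are zero. $\mathbf{Q}_{\{i\}}=\mathbf{I}_n-\mathbf{b}_i\mathbf{b}_i^\dagger$ and $\mathbf{P}_{\{i\}}=\mathbf{I}_d-\mathbf{c}_i^{\rm T\dagger}\mathbf{c}_i^{\rm T}$ (i.e. $\mathbf{Q}_S=\mathbf{I}_n-\mathbf{B}_{:,S}\mathbf{B}_{:,S}^\dagger$, $\mathbf{P}_R=\mathbf{I}_d-\mathbf{C}_{R,:}^\dagger\mathbf{C}_{R,:}$ for singletons). For general $\mathbf{A}',\mathbf{B}',\mathbf{C}'$ of shapes $n\times d$, $n\times d_B$, $n_C\times d$: $p_{T,U}(x;\mathbf{A}',\mathbf{B}',\mathbf{C}')=\det[x\mathbf{I}_d-(\mathbf{Q}'_T\mathbf{A}'\mathbf{P}'_U)^{\rm T}(\mathbf{Q}'_T\mathbf{A}'\mathbf{P}'_U)]$ with $\mathbf{Q}'_T=\mathbf{I}_n-\mathbf{B}'_{:,T}\mathbf{B}'^\dagger_{:,T}$, $\mathbf{P}'_U=\mathbf{I}_d-\mathbf{C}'^\dagger_{U,:}\mathbf{C}'_{U,:}$,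 and $P_{k,r}(x;\mathbf{A}',\mathbf{B}',\mathbf{C}')=\sum_{U\subset[n_C],|U|=r}\sum_{T\subset[d_B],|T|=k}\det[\mathbf{C}'_{U,:}\mathbf{C}'^{\rm T}_{U,:}]\det[\mathbf{B}'^{\rm T}_{:,T}\mathbf{B}'_{:,T}]\,p_{T,U}(x;\mathbf{A}',\mathbf{B}',\mathbf{C}')$. *)

(* Defs.v *)
From HB Require Import structures.
From mathcomp Require Import all_boot all_order all_algebra.
From Stdlib Require Import ClassicalEpsilon.
Set Implicit Arguments. Unset Strict Implicit. Unset Printing Implicit Defensive.
Import Order.TTheory GRing.Theory Num.Theory.
Local Open Scope ring_scope.

Section Defs.
Variable R : realFieldType.

Definition penrose m n (M : 'M[R]_(m, n)) (X : 'M[R]_(n, m)) : Prop :=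
  [/\ M *m X *m M = M, X *m M *m X = X,
      (M *m X)^T = M *m X & (X *m M)^T = X *m M].

Definition pinv m n (M : 'M[R]_(m, n)) : 'M[R]_(n, m) :=
  epsilon (inhabits 0) (penrose M).

(* submatrices B_{:,T} and C_{U,:} (indices of T, U in increasing order) *)
Definition csub n dB (B : 'M[R]_(n, dB)) (T : {set 'I_dB}) : 'M[R]_(n, #|T|) :=
  colsub (fun j => enum_val j) B.
Definition rsub nC d (C : 'M[R]_(nC, d)) (U : {set 'I_nC}) : 'M[R]_(#|U|, d) :=
  rowsub (fun j => enum_val j) C.

Definition Qproj n dB (B : 'M[R]_(n, dB)) (T : {set 'I_dB}) : 'M[R]_n :=
  1%:M - csub B T *m pinv (csub B T).
Definition Pproj nC d (C : 'M[R]_(nC, d)) (U : {set 'I_nC}) : 'M[R]_d :=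
  1%:M - pinv (rsub C U) *m rsub C U.

Definition pTU n d dB nC (A : 'M[R]_(n, d)) (B : 'M[R]_(n, dB)) (C : 'M[R]_(nC, d))
    (T : {set 'I_dB}) (U : {set 'I_nC}) : {poly R} :=
  let M := Qproj B T *m A *m Pproj C U in char_poly (M^T *m M).

Definition Pkr n d dB nC (k r : nat) (A : 'M[R]_(n, d)) (B : 'M[R]_(n, dB))
    (C : 'M[R]_(nC, d)) : {poly R} :=
  \sum_(U : {set 'I_nC} | #|U| == r) \sum_(T : {set 'I_dB} | #|T| == k)
    (\det (rsub C U *m (rsub C U)^T) * \det ((csub B T)^T *m csub B T))
      *: pTU A B C T U.

Definition colnorm2 n dB (B : 'M[R]_(n, dB)) (i : 'I_dB) : R := \sum_j B j i ^+ 2.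
Definition rownorm2 nC d (C : 'M[R]_(nC, d)) (i : 'I_nC) : R := \sum_j C i j ^+ 2.

End Defs.

(* Main.v *)
Require Import Defs.
From HB Require Import structures.
From mathcomp Require Import all_boot all_order all_algebra.
From Stdlib Require Import ClassicalEpsilon.
From mathcomp Require Import ring.
Set Implicit Arguments. Unset Strict Implicit. Unset Printing Implicit Defensive.
Import Order.TTheory GRing.Theory Num.Theory.
Local Open Scope ring_scope.

Section Aux.
Variable R : realFieldType.

Lemma pinv_spec m p (M : 'M[R]_(m,p)) X : penrose M X -> penrose M (pinv M).
Proof. move=> h; rewrite /pinv; apply: epsilon_spec; by exists X. Qed.

Lemma gram_sym m p (M : 'M[R]_(m,p)) : (M^T *m M)^T = M^T *m M.
Proof. by rewrite trmx_mul trmxK. Qed.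

Lemma invgram_sym m p (M : 'M[R]_(m,p)) : (invmx (M^T *m M))^T = invmx (M^T *m M).
Proof. by rewrite trmx_inv gram_sym. Qed.

Lemma pinv_col m p (M : 'M[R]_(m,p)) : (M^T *m M) \in unitmx ->
  pinv M = invmx (M^T *m M) *m M^T.
Proof.
move=> U.
have h0 : penrose M (invmx (M^T *m M) *m M^T).
  split.
  - by rewrite -!mulmxA mulVmx // mulmx1.
  - by rewrite -!mulmxA (mulmxA M^T) mulKmx.
  - by rewrite !trmx_mul trmxK invgram_sym -!mulmxA.
  - by rewrite -mulmxA mulVmx // trmx1.
case: (pinv_spec h0) => h1 _ h3 _.
have e : (M^T *m M) *m pinv M = M^T.
  by rewrite -mulmxA -h3 -trmx_mul h1.
by move/(congr1 (mulmx (invmx (M^T *m M)))): e; rewrite mulKmx.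
Qed.

Lemma pinv_row m p (M : 'M[R]_(m,p)) : (M *m M^T) \in unitmx ->
  pinv M = M^T *m invmx (M *m M^T).
Proof.
move=> U.
have Gs : (invmx (M *m M^T))^T = invmx (M *m M^T) by rewrite trmx_inv trmx_mul trmxK.
have h0 : penrose M (M^T *m invmx (M *m M^T)).
  split.
  - by rewrite !mulmxA mulmxV // mul1mx.
  - by rewrite -!mulmxA (mulmxA M) mulmxV // mulmx1 .
  - by rewrite mulmxA mulmxV // trmx1.
  - by rewrite !trmx_mul trmxK Gs mulmxA.
case: (pinv_spec h0) => h1 _ _ h4.
have e : pinv M *m (M *m M^T) = M^T.
  by rewrite mulmxA -h4 -trmx_mul mulmxA h1.
by move/(congr1 (mulmx^~ (invmx (M *m M^T)))): e; rewrite mulmxK.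
Qed.

Definition gram m p (M : 'M[R]_(m,p)) := M^T *m M.
Definition prj m p (M : 'M[R]_(m,p)) : 'M[R]_m := M *m invmx (gram M) *m M^T.

Lemma invmx_left k (A B : 'M[R]_k) : A *m B = 1%:M -> invmx B = A.
Proof.
move=> h; have [_ uB] := mulmx1_unit h.
by rewrite -[LHS]mul1mx -h -mulmxA mulmxV // mulmx1.
Qed.

Lemma invmxM k (A B : 'M[R]_k) : A \in unitmx -> B \in unitmx ->
  invmx (A *m B) = invmx B *m invmx A.
Proof.
move=> uA uB; apply: invmx_left.
by rewrite mulmxA -(mulmxA _ (invmx A)) mulVmx // mulmx1 mulVmx.
Qed.

Lemma gram_mulS m p (M : 'M[R]_(m,p)) (S : 'M[R]_p) :
  gram (M *m S) = S^T *m gram M *m S.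
Proof. by rewrite /gram trmx_mul !mulmxA. Qed.

Lemma det_gram_mulS m p (M : 'M[R]_(m,p)) (S : 'M[R]_p) :
  \det (gram (M *m S)) = \det S ^+ 2 * \det (gram M).
Proof. by rewrite gram_mulS !det_mulmx det_tr expr2; ring. Qed.

Lemma gram_sym' m p (M : 'M[R]_(m,p)) : (gram M)^T = gram M.
Proof. exact: gram_sym. Qed.

Lemma prj_sym m p (M : 'M[R]_(m,p)) : (prj M)^T = prj M.
Proof. by rewrite /prj !trmx_mul trmxK trmx_inv gram_sym' mulmxA. Qed.

Lemma prj_mulS m p (M : 'M[R]_(m,p)) (S : 'M[R]_p) :
  S \in unitmx -> gram M \in unitmx -> prj (M *m S) = prj M.
Proof.
move=> uS uG.
rewrite /prj gram_mulS !invmxM ?unitmx_mul ?unitmx_tr ?uS ?uG // trmx_mul.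
by rewrite !mulmxA mulmxK // mulmxKV ?unitmx_tr.
Qed.

Lemma prj_M m p (M : 'M[R]_(m,p)) : gram M \in unitmx -> prj M *m M = M.
Proof. by move=> uG; rewrite /prj -mulmxA mulmxKV. Qed.

Lemma prj_orth k1 k2 k3 (P : 'M[R]_(k1,k2)) (Q : 'M[R]_(k1,k3)) :
  P^T *m Q = 0 -> prj P *m prj Q = 0.
Proof. by move=> h; rewrite /prj -!mulmxA (mulmxA P^T) h mul0mx !mulmx0. Qed.

Section Core.
Variables (n m : nat) (b : 'M[R]_(n,1)) (M' : 'M[R]_(n,m)).
Hypothesis ub : gram b \in unitmx.

Definition Qb := 1%:M - prj b.

Lemma Qb_b : Qb *m b = 0.
Proof. by rewrite /Qb mulmxBl mul1mx prj_M // subrr. Qed.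

Lemma Qb_sym : Qb^T = Qb.
Proof. by rewrite /Qb linearB /= trmx1 prj_sym. Qed.

Lemma bt_Qb : b^T *m Qb = 0.
Proof. by rewrite -Qb_sym -trmx_mul Qb_b trmx0. Qed.

Definition Smx : 'M[R]_(1 + m) :=
  block_mx 1%:M (- (invmx (gram b) *m b^T *m M')) 0 1%:M.

Lemma det_Smx : \det Smx = 1.
Proof. by rewrite /Smx det_ublock !det1 mulr1. Qed.

Lemma unit_Smx : Smx \in unitmx.
Proof. by rewrite unitmxE det_Smx unitr1. Qed.

Lemma NS : row_mx b M' *m Smx = row_mx b (Qb *m M').
Proof.
rewrite /Smx mul_row_block !mulmx1 !mulmx0 addr0 mulmxN.
by rewrite /Qb mulmxBl mul1mx /prj !mulmxA addrC.
Qed.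

Lemma gram_row k (c : 'M[R]_(n,1)) (L : 'M[R]_(n,k)) :
  gram (row_mx c L) = block_mx (gram c) (c^T *m L) (L^T *m c) (gram L).
Proof. by rewrite /gram tr_row_mx mul_col_row. Qed.

Lemma bL0 : b^T *m (Qb *m M') = 0.
Proof. by rewrite mulmxA bt_Qb mul0mx. Qed.

Lemma Lb0 : (Qb *m M')^T *m b = 0.
Proof. by rewrite trmx_mul Qb_sym -mulmxA Qb_b mulmx0. Qed.

Lemma det_core :
  \det (gram (row_mx b M')) = (gram b) 0 0 * \det (gram (Qb *m M')).
Proof.
rewrite -[LHS]mul1r -(expr1n _ 2) -det_Smx -det_gram_mulS NS gram_row bL0 Lb0.
by rewrite det_ublock det_mx11.
Qed.

Lemma prj_core : \det (gram (Qb *m M')) != 0 ->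
  prj (row_mx b M') = prj b + prj (Qb *m M').
Proof.
move=> nz.
have uL : gram (Qb *m M') \in unitmx by rewrite unitmxE unitfE.
have uN : gram (row_mx b M') \in unitmx.
  by rewrite unitmxE unitfE det_core mulf_neq0 // -det_mx11 -unitfE -unitmxE.
rewrite -(prj_mulS unit_Smx uN) NS.
have iG : invmx (gram (row_mx b (Qb *m M'))) =
    block_mx (invmx (gram b)) 0 0 (invmx (gram (Qb *m M'))).
  apply: invmx_left.
  rewrite gram_row bL0 Lb0 mulmx_block !mulmx0 !mul0mx !addr0 !add0r.
  by rewrite !mulVmx // -scalar_mx_block.
rewrite /prj iG tr_row_mx mul_row_block !mulmx0 addr0 add0r mul_row_col.
by [].
Qed.

Lemma prjLb : prj (Qb *m M') *m prj b = 0.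
Proof. exact: prj_orth Lb0. Qed.

Lemma prjbL : prj b *m prj (Qb *m M') = 0.
Proof. exact: prj_orth bL0. Qed.

Lemma Q_core : \det (gram (Qb *m M')) != 0 ->
  (1%:M - prj (Qb *m M')) *m Qb = 1%:M - prj (row_mx b M') /\
  Qb *m (1%:M - prj (Qb *m M')) = 1%:M - prj (row_mx b M').
Proof.
move=> nz; rewrite prj_core //.
have e : Qb = 1%:M - prj b by [].
move: prjLb prjbL; rewrite e.
move: (prj b) (prj (Qb *m M')) => PB PL h1 h2.
rewrite !mulmxBl !mulmxBr !mul1mx !mulmx1 h1 h2 !subr0.
split; rewrite opprD addrA //.
by rewrite addrAC.
Qed.

End Core.

Lemma colsub_img (n N m m' : nat) (X : 'M[R]_(n,N)) (f : 'I_m -> 'I_N)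
  (g : 'I_m' -> 'I_N) :
  injective f -> injective g -> codom f =i codom g ->
  \det (gram (colsub f X)) = \det (gram (colsub g X)) /\
  (gram (colsub f X) \in unitmx -> prj (colsub f X) = prj (colsub g X)).
Proof.
move=> injf injg hc.
have em : m' = m.
  rewrite -(card_ord m) -(card_ord m') -(card_codom injf) -(card_codom injg).
  by apply: eq_card => x; rewrite hc.
subst m'.
have ex j : exists k, f k = g j.
  have : g j \in codom f by rewrite hc codom_f.
  by case/codomP => k ->; exists k.
pose S : 'M[R]_m := \matrix_(k, j) (f k == g j)%:R.
have XS : colsub f X *m S = colsub g X.
  apply/matrixP => r j; rewrite !mxE.
  have [k0 hk0] := ex j.
  rewrite (bigD1 k0) //= big1 ?addr0.
    by rewrite !mxE hk0 eqxx mulr1.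
  move=> k hk; rewrite !mxE -hk0 inj_eq //.
  by rewrite (negPf hk) mulr0.
have STS : S^T *m S = 1%:M.
  apply/matrixP => j j'; rewrite !mxE.
  have [k0 hk0] := ex j.
  rewrite (bigD1 k0) //= big1 ?addr0.
    by rewrite !mxE hk0 eqxx mul1r (inj_eq injg).
  move=> k hk; rewrite !mxE -hk0 inj_eq //.
  by rewrite (negPf hk) mul0r.
have [_ uS] := mulmx1_unit STS.
have dS : \det S ^+ 2 = 1.
  by rewrite expr2 -{1}det_tr -det_mulmx STS det1.
split.
  by rewrite -XS det_gram_mulS dS mul1r.
by move=> uG; rewrite -XS prj_mulS.
Qed.

Section Bridge.
Variables (n N : nat) (X : 'M[R]_(n,N)).

Lemma codom_enum (A : {set 'I_N}) :
  codom (fun j : 'I_#|A| => enum_val j) =i A.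
Proof.
move=> x; apply/codomP/idP => [[j ->]|xA]; first exact: enum_valP.
by exists (enum_rank_in xA x); rewrite enum_rankK_in.
Qed.

Lemma enum_inj (A : {set 'I_N}) : injective (fun j : 'I_#|A| => enum_val j).
Proof. exact: enum_val_inj. Qed.

Definition gsplit (i : 'I_N) (T : {set 'I_N}) (j : 'I_(1 + #|T|)) : 'I_N :=
  match split j with inl _ => i | inr j' => enum_val j' end.
Arguments gsplit i T j : clear implicits.

Lemma colsub_gsplit i T :
  colsub (gsplit i T) X = row_mx (col i X) (csub X T).
Proof.
apply/matrixP => r j; rewrite !mxE /gsplit.
by case: (split j) => a; rewrite !mxE.
Qed.

Lemma gsplit_inj i (T : {set 'I_N}) : i \notin T -> injective (gsplit i T).
Proof.
move=> iT j1 j2; rewrite /gsplit.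
case: splitP => a1 e1; case: splitP => a2 e2 h.
- by apply: val_inj; rewrite /= e1 e2 (ord1 a1) (ord1 a2).
- by case/negP: iT; rewrite h enum_valP.
- by case/negP: iT; rewrite -h enum_valP.
- by apply: val_inj; rewrite /= e1 e2 (enum_val_inj h).
Qed.

Lemma codom_gsplit i (T : {set 'I_N}) : codom (gsplit i T) =i i |: T.
Proof.
move=> x; rewrite in_setU1; apply/codomP/idP.
  case=> j ->; rewrite /gsplit; case: (split j) => a; first by rewrite eqxx.
  by rewrite enum_valP orbT.
case/orP => [/eqP ->|xT].
  by exists (lshift #|T| (ord0 : 'I_1)); rewrite /gsplit (unsplitK (inl _)).
exists (rshift 1 (enum_rank_in xT x)).
by rewrite /gsplit (unsplitK (inr _)) enum_rankK_in.
Qed.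

Lemma csub_split i (T : {set 'I_N}) : i \notin T ->
  \det (gram (csub X (i |: T))) = \det (gram (row_mx (col i X) (csub X T))) /\
  (gram (csub X (i |: T)) \in unitmx ->
     prj (csub X (i |: T)) = prj (row_mx (col i X) (csub X T))).
Proof.
move=> iT; rewrite -colsub_gsplit; apply: colsub_img.
- exact: enum_inj.
- exact: gsplit_inj.
- by move=> x; rewrite codom_enum codom_gsplit.
Qed.

Lemma col_colsub i : col i X = colsub (fun _ : 'I_1 => i) X.
Proof. by apply/matrixP => r j; rewrite !mxE. Qed.

Lemma csub_single i :
  \det (gram (csub X [set i])) = \det (gram (col i X)) /\
  (gram (csub X [set i]) \in unitmx -> prj (csub X [set i]) = prj (col i X)).
Proof.
rewrite col_colsub; apply: colsub_img.
- exact: enum_inj.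
- by move=> a b _; rewrite (ord1 a) (ord1 b).
- move=> x; rewrite codom_enum in_set1; apply/eqP/codomP => [->|[j ->]] //.
  by exists ord0.
Qed.

End Bridge.

Lemma colsub_mull k n N m (Q : 'M[R]_(k,n)) (X : 'M[R]_(n,N)) (f : 'I_m -> 'I_N) :
  colsub f (Q *m X) = Q *m colsub f X.
Proof. by apply/matrixP => r j; rewrite !mxE; apply: eq_bigr => l _; rewrite !mxE. Qed.

Lemma csub_mull k n N (Q : 'M[R]_(k,n)) (X : 'M[R]_(n,N)) T :
  csub (Q *m X) T = Q *m csub X T.
Proof. exact: colsub_mull. Qed.

Lemma col_mull k n N (Q : 'M[R]_(k,n)) (X : 'M[R]_(n,N)) i :
  col i (Q *m X) = Q *m col i X.
Proof. by rewrite !colEsub colsub_mull. Qed.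

Lemma det_gram_row0 n k (M' : 'M[R]_(n,k)) :
  \det (gram (row_mx (0 : 'M[R]_(n,1)) M')) = 0.
Proof.
rewrite gram_row /gram trmx0 !mul0mx mulmx0 det_ublock det_mx11 mxE.
by rewrite mul0r.
Qed.

Lemma colnorm2E n N (X : 'M[R]_(n,N)) i : colnorm2 X i = gram (col i X) 0 0.
Proof. by rewrite /colnorm2 /gram mxE; apply: eq_bigr => j _; rewrite !mxE expr2. Qed.

Lemma colnorm2_0 n N (X : 'M[R]_(n,N)) i : colnorm2 X i = 0 -> col i X = 0.
Proof.
rewrite /colnorm2 => /eqP; rewrite psumr_eq0 => [/allP h|j _]; last exact: sqr_ge0.
apply/matrixP => r j; rewrite !mxE.
by have := h r (mem_index_enum r); rewrite sqrf_eq0 => /eqP.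
Qed.

Lemma unit_gram_col n N (X : 'M[R]_(n,N)) i :
  colnorm2 X i != 0 -> gram (col i X) \in unitmx.
Proof. by rewrite unitmxE det_mx11 -colnorm2E unitfE. Qed.

Lemma Qproj_eq n N (X : 'M[R]_(n,N)) T :
  gram (csub X T) \in unitmx -> Qproj X T = 1%:M - prj (csub X T).
Proof. by move=> u; rewrite /Qproj pinv_col // /prj mulmxA. Qed.

Lemma rsub_tr nC d (C : 'M[R]_(nC,d)) U : rsub C U = (csub C^T U)^T.
Proof. by apply/matrixP => r j; rewrite !mxE. Qed.

Lemma Pproj_eq nC d (C : 'M[R]_(nC,d)) U :
  gram (csub C^T U) \in unitmx -> Pproj C U = 1%:M - prj (csub C^T U).
Proof.
move=> u; rewrite /Pproj rsub_tr pinv_row trmxK // /prj mulmxA.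
Qed.

Lemma dC_eq nC d (C : 'M[R]_(nC,d)) U :
  \det (rsub C U *m (rsub C U)^T) = \det (gram (csub C^T U)).
Proof. by rewrite rsub_tr trmxK. Qed.

Lemma Qi_eq n N (X : 'M[R]_(n,N)) i :
  colnorm2 X i != 0 -> Qproj X [set i] = Qb (col i X).
Proof.
move=> nz; have ub := unit_gram_col nz.
have [d1 p1] := csub_single X i.
have u1 : gram (csub X [set i]) \in unitmx by rewrite unitmxE d1 -unitmxE.
by rewrite Qproj_eq // p1.
Qed.

Lemma det_in_zero n N (X : 'M[R]_(n,N)) i (T : {set 'I_N}) :
  col i X = 0 -> i \in T -> \det (gram (csub X T)) = 0.
Proof.
move=> c0 iT; rewrite -(setD1K iT).
have [-> _] := csub_split X (negbT (setD11 i T)).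
by rewrite c0 det_gram_row0.
Qed.

Lemma termB n d dB nC (A : 'M[R]_(n,d)) (B : 'M[R]_(n,dB)) (C : 'M[R]_(nC,d))
  i (T : {set 'I_dB}) (U : {set 'I_nC}) (c : R) :
  colnorm2 B i *: ((c * \det ((csub (Qproj B [set i] *m B) T)^T
                                 *m csub (Qproj B [set i] *m B) T))
     *: pTU (Qproj B [set i] *m A) (Qproj B [set i] *m B) C T U)
  = if i \in T then 0 else
     (c * \det ((csub B (i |: T))^T *m csub B (i |: T))) *: pTU A B C (i |: T) U.
Proof.
have [b0|nz] := eqVneq (colnorm2 B i) 0.
  rewrite b0 scale0r; case: ifP => // /negbT iT.
  by rewrite (det_in_zero (colnorm2_0 b0) (setU11 i T)) mulr0 scale0r.
rewrite Qi_eq //.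
have ub := unit_gram_col nz.
case: ifPn => iT.
  rewrite (det_in_zero (X := Qb (col i B) *m B) (i := i)) ?mulr0 ?scale0r ?scaler0 //.
  by rewrite col_mull Qb_b.
have [d1 p1] := csub_split B iT.
rewrite [\det ((csub B _)^T *m _)]d1 det_core // -colnorm2E csub_mull.
have [D0|Dnz] := eqVneq (\det (gram (Qb (col i B) *m csub B T))) 0.
  by rewrite /gram in D0 *; rewrite D0 !mulr0 !scale0r scaler0.
rewrite scalerA; congr (_ *: _); first by rewrite /gram; ring.
rewrite /pTU; suff -> : Qproj (Qb (col i B) *m B) T *m (Qb (col i B) *m A) = Qproj B (i |: T) *m A by [].
have uN : gram (csub B (i |: T)) \in unitmx.
  by rewrite unitmxE unitfE d1 det_core // mulf_neq0 // -det_mx11 -unitfE -unitmxE.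
have uL : gram (csub (Qb (col i B) *m B) T) \in unitmx.
  by rewrite unitmxE unitfE csub_mull.
rewrite (Qproj_eq uN) (p1 uN) (Qproj_eq uL) csub_mull mulmxA.
by case: (Q_core ub Dnz) => ->.
Qed.

Lemma rownorm2E nC d (C : 'M[R]_(nC,d)) i : rownorm2 C i = colnorm2 C^T i.
Proof. by rewrite /rownorm2 /colnorm2; apply: eq_bigr => j _; rewrite mxE. Qed.

Lemma termC n d dB nC (A : 'M[R]_(n,d)) (B : 'M[R]_(n,dB)) (C : 'M[R]_(nC,d))
  i (T : {set 'I_dB}) (U : {set 'I_nC}) (c : R) :
  rownorm2 C i *:
    ((\det (rsub (C *m Pproj C [set i]) U *m (rsub (C *m Pproj C [set i]) U)^T) * c)
     *: pTU (A *m Pproj C [set i]) B (C *m Pproj C [set i]) T U)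
  = if i \in U then 0 else
     (\det (rsub C (i |: U) *m (rsub C (i |: U))^T) * c) *: pTU A B C T (i |: U).
Proof.
rewrite !dC_eq rownorm2E.
have [b0|nz] := eqVneq (colnorm2 C^T i) 0.
  rewrite b0 scale0r; case: ifP => // /negbT iU.
  by rewrite (det_in_zero (colnorm2_0 b0) (setU11 i U)) mul0r scale0r.
have ub := unit_gram_col nz.
have ePi : Pproj C [set i] = Qb (col i C^T).
  have [d1 p1] := csub_single C^T i.
  have u1 : gram (csub C^T [set i]) \in unitmx by rewrite unitmxE d1 -unitmxE.
  by rewrite Pproj_eq // p1.
have eT : (C *m Qb (col i C^T))^T = Qb (col i C^T) *m C^T by rewrite trmx_mul Qb_sym.
rewrite ePi eT.
case: ifPn => iU.
  rewrite (det_in_zero (X := Qb (col i C^T) *m C^T) (i := i)) ?mul0r ?scale0r ?scaler0 //.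
  by rewrite col_mull Qb_b.
have [d1 p1] := csub_split C^T iU.
rewrite d1 det_core // -colnorm2E csub_mull.
have [D0|Dnz] := eqVneq (\det (gram (Qb (col i C^T) *m csub C^T U))) 0.
  by rewrite D0 !(mul0r, mulr0) !scale0r scaler0.
rewrite scalerA; congr (_ *: _); first by ring.
have uN : gram (csub C^T (i |: U)) \in unitmx.
  by rewrite unitmxE unitfE d1 det_core // mulf_neq0 // -det_mx11 -unitfE -unitmxE.
have uL : gram (csub (C *m Qb (col i C^T))^T U) \in unitmx.
  by rewrite unitmxE unitfE eT csub_mull.
rewrite /pTU (Pproj_eq uN) (p1 uN) (Pproj_eq uL) eT csub_mull -!mulmxA.
by case: (Q_core ub Dnz) => _ ->.
Qed.

Lemma comb (V : zmodType) N k (F : {set 'I_N} -> V) : (0 < k)%N ->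
  \sum_(i < N) \sum_(T : {set 'I_N} | #|T| == k.-1)
      (if i \in T then 0 else F (i |: T))
  = (\sum_(T : {set 'I_N} | #|T| == k) F T) *+ k.
Proof.
move=> k0.
rewrite -sumrMnl.
have e1 : forall T : {set 'I_N}, #|T| == k ->
    F T *+ k = \sum_(i < N) (if i \in T then F T else 0).
  move=> T /eqP hT; rewrite -big_mkcond /= sumr_const.
  by rewrite -hT; congr (_ *+ _); apply: eq_card => x; rewrite !inE.
rewrite (eq_bigr _ e1) [RHS]exchange_big /=.
apply: eq_bigr => i _.
rewrite -[RHS]big_mkcondr /=.
rewrite (eq_bigr (fun T : {set 'I_N} => if i \notin T then F (i |: T) else 0)); last first.
  by move=> T _; rewrite if_neg.
rewrite -big_mkcondr /=.
rewrite [RHS](reindex_onto (fun T : {set 'I_N} => i |: T) (fun T : {set 'I_N} => T :\ i)) /=; last first.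
  by move=> T /andP[_ iT]; rewrite setD1K.
apply: eq_bigl => T.
case: (boolP (i \in T)) => h /=.
  rewrite andbF; apply/esym/negbTE; apply/negP => /andP[_ /eqP e].
  by move: h; rewrite -e setD11.
rewrite andbT setU1K // eqxx setU11 andbT cardsU1 h add1n.
by rewrite andbT; clear e1; case: k k0.
Qed.

End Aux.

Lemma partB (R : realFieldType) (n d dB nC : nat)
  (A : 'M[R]_(n, d)) (B : 'M[R]_(n, dB)) (C : 'M[R]_(nC, d)) (k r : nat) :
  (0 < k)%N ->
  Pkr k r A B C =
    k%:R^-1 *: \sum_(i < dB) colnorm2 B i *:
       Pkr k.-1 r (Qproj B [set i] *m A) (Qproj B [set i] *m B) C.
Proof.
move=> k0; rewrite /Pkr; apply/esym.
under eq_bigr do rewrite scaler_sumr; under eq_bigr do under eq_bigr do rewrite scaler_sumr.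
under eq_bigr do under eq_bigr do under eq_bigr do rewrite termB.
rewrite exchange_big /=.
under eq_bigr => U _ do rewrite (comb (fun T => (\det (rsub C U *m (rsub C U)^T) * \det ((csub B T)^T *m csub B T)) *: pTU A B C T U) k0).
rewrite sumrMnl -scaler_nat scalerA mulVf ?scale1r //.
by rewrite pnatr_eq0 -lt0n.
Qed.

Lemma big_if0 (V : zmodType) (I : finType) (P : pred I) (b : bool) (G : I -> V) :
  \sum_(x | P x) (if b then 0 else G x) = if b then 0 else \sum_(x | P x) G x.
Proof. by case: b => //; rewrite big1. Qed.

Lemma partC (R : realFieldType) (n d dB nC : nat)
  (A : 'M[R]_(n, d)) (B : 'M[R]_(n, dB)) (C : 'M[R]_(nC, d)) (k r : nat) :
  (0 < r)%N ->
  Pkr k r A B C =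
    r%:R^-1 *: \sum_(i < nC) rownorm2 C i *:
       Pkr k r.-1 (A *m Pproj C [set i]) B (C *m Pproj C [set i]).
Proof.
move=> r0; rewrite /Pkr; apply/esym.
under eq_bigr do rewrite scaler_sumr; under eq_bigr do under eq_bigr do rewrite scaler_sumr.
under eq_bigr do under eq_bigr do under eq_bigr do rewrite termC.
under eq_bigr do under eq_bigr do rewrite big_if0.
rewrite (comb (fun U => \sum_(T : {set 'I_dB} | #|T| == k) (\det (rsub C U *m (rsub C U)^T) * \det ((csub B T)^T *m csub B T)) *: pTU A B C T U) r0).
rewrite -scaler_nat scalerA mulVf ?scale1r //.
by rewrite pnatr_eq0 -lt0n.
Qed.

Theorem lemmaA4 (R : realFieldType) (n d dB nC : nat)
  (A : 'M[R]_(n, d)) (B : 'M[R]_(n, dB)) (C : 'M[R]_(nC, d)) (k r : nat) :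
  (1 <= k <= \rank B)%N -> (1 <= r <= \rank C)%N ->
  Pkr k r A B C =
    k%:R^-1 *: \sum_(i < dB) colnorm2 B i *:
       Pkr k.-1 r (Qproj B [set i] *m A) (Qproj B [set i] *m B) C
  /\
  Pkr k r A B C =
    r%:R^-1 *: \sum_(i < nC) rownorm2 C i *:
       Pkr k r.-1 (A *m Pproj C [set i]) B (C *m Pproj C [set i]).
Proof.
move=> /andP[k0 _] /andP[r0 _]; split; [exact: partB | exact: partC].
Qed.
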